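(* Let $n,k,R$ be positive integers with $k<n$, and let $L=\min\{k,R\}$. The capacity (in bits per channel use) of the Coupon Collector Channel $\mathrm{CC}(n,k,R)$ is \[ \mathcal{C}_{\mathrm{CC}} \;=\; \log_2\binom{n}{k} \;-\; k^{-R}\sum_{\ell=1}^{L}\binom{k}{\ell}\genfrac{\{}{\}}{0pt}{}{R}{\ell}\,\ell!\,\log_2\binom{n-\ell}{k-\ell}, \] and this capacity is achieved by the uniform distribution on the input alphabet $\mathcal{X}$.
   Context: Let $\mathcal{M}$ be a set of $n$ distinct elements (''motifs'') and $k$ an integer with $1\le k<n$. The input alphabet $\mathcal{X}$ is the set of all $k$-element subsets $\mathbf{x}\subset\mathcal{M}$, so $|\mathcal{X}|=\binom{n}{k}$. For a positive integer $R$, the Coupon Collector Channel $\mathrm{CC}(n,k,R)$ is the discrete memoryless channel which, on input $\mathbf{x}\in\mathcal{X}$, outputs $\mathbf{y}=(y_1,\dots,y_R)\in\mathcal{M}^R$ where $y_1,\dots,y_R$ are drawn independently and uniformly at random from $\mathbf{x}$ (so $P(\mathbf{y}\mid\mathbf{x})=k^{-R}$ if every $y_i\in\mathbf{x}$ and $0$ otherwise). The output alphabet $\mathcal{Y}$ is the set of $R$-tuples over $\mathcal{M}$ containing between $1$ and $L=\min\{k,R\}$ distinct elements. The capacity is $\max_{P_X} I(X;Y)$ over input distributions on $\mathcal{X}$. $\genfrac{\{}{\}}{0pt}{}{R}{\ell}=\frac{1}{\ell!}\sum_{i=0}^{\ell}(-1)^{\ell-i}\binom{\ell}{i}i^R$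 denotes the Stirling number of the second kind. *)

(* Defs.v *)
From HB Require Import structures.
From mathcomp Require Import all_boot all_order all_algebra.
From mathcomp Require Import reals exp.
Set Implicit Arguments. Unset Strict Implicit. Unset Printing Implicit Defensive.
Import Order.TTheory GRing.Theory Num.Theory.
Local Open Scope ring_scope.

Definition log2 {R : realType} (x : R) : R := ln x / ln 2.

Definition stirling2 {R : realType} (r l : nat) : R :=
  (l`!%:R)^-1 * \sum_(i < l.+1) (-1) ^+ (l - i) * 'C(l, i)%:R * (i ^ r)%:R.

Definition CCin (n k : nat) := {x : {set 'I_n} | #|x| == k}.

(** Output: R-tuples over M (tuples with more than min(k,R) distinct
    elements have probability zero, so they do not affect I(X;Y)). *)
Definition CCout (n r : nat) := {ffun 'I_r -> 'I_n}.

Definition CCchan {R : realType} (n k r : nat) (x : CCin n k) (y : CCout n r) : R :=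
  if [forall i, y i \in val x] then ((k%:R) ^- r) else 0.

Definition is_dist {R : realType} {T : finType} (P : T -> R) : Prop :=
  (forall t, 0 <= P t) /\ \sum_t P t = 1.

Definition mutinf {R : realType} {X Y : finType} (P : X -> R) (W : X -> Y -> R) : R :=
  \sum_(x : X) \sum_(y : Y)
     let Q := \sum_(x' : X) P x' * W x' y in
     (if P x * W x y == 0 then 0 else P x * W x y * log2 (W x y / Q)).

Definition is_capacity {R : realType} {X Y : finType} (W : X -> Y -> R) (C : R) : Prop :=
  (exists P : X -> R, is_dist P /\ mutinf P W = C) /\
  (forall P : X -> R, is_dist P -> mutinf P W <= C).

Definition unif {R : realType} {T : finType} : T -> R := fun _ => (#|T|%:R)^-1.

(* Main.v *)
Require Import Defs.
From HB Require Import structures.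
From mathcomp Require Import all_boot all_order all_algebra.
From mathcomp Require Import reals exp.
From mathcomp Require Import zify ring lra.
Import Order.TTheory GRing.Theory Num.Theory.
Local Open Scope ring_scope.

Lemma binA (m i j : nat) : ('C(m, i + j) * 'C(i + j, j) = 'C(m, j) * 'C(m - j, i))%N.
Proof.
have [lt|le] := ltnP m (i + j).
  rewrite (bin_small lt) mul0n.
  have [hj|hj] := ltnP m j; first by rewrite (bin_small hj).
  have h : (m - j < i)%N by lia.
  by rewrite (bin_small h) muln0.
apply/eqP; rewrite -(@eqn_pmul2r (j`! * i`! * (m - j - i)`!)); last by rewrite !muln_gt0 !fact_gt0.
have e1 := @bin_fact (i + j) j (leq_addl _ _).
have e2 := @bin_fact m (i + j) le.
have e3 := @bin_fact (m - j) i ltac:(lia).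
have e4 := @bin_fact m j ltac:(lia).
rewrite addnK in e1.
have -> : (m - j - i = m - (i + j))%N by lia.
apply/eqP.
have -> : ('C(m, i + j) * 'C(i + j, j) * (j`! * i`! * (m - (i + j))`!) =
   ('C(i + j, j) * (j`! * i`!)) * 'C(m, i+j) * (m - (i + j))`!)%N by ring.
rewrite e1 -mulnA mulnCA -mulnA e2.
have -> : ('C(m, j) * ('C(m - j, i) * (j`! * i`! * (m - (i + j))`!)) =
   'C(m, j) * (j`! * ('C(m - j, i) * (i`! * (m - j - i)`!))))%N.
  have -> : (m - j - i = m - (i + j))%N by lia. ring.
by rewrite e3 e4.
Qed.

Definition sfun {R : realType} (r m : nat) : R :=
  \sum_(i < m.+1) (-1) ^+ (m - i) * 'C(m, i)%:R * (i ^ r)%:R.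

Lemma alt_sum {R : realType} (p : nat) :
  \sum_(i < p.+1) (-1) ^+ i * ('C(p, i))%:R = (p == 0%N)%:R :> R.
Proof.
have := exprBn (1 : R) 1 p.
rewrite subrr expr0n => ->.
by apply: eq_bigr => i _; rewrite !expr1n !mulr1 mulr_natr.
Qed.

Lemma inner {R : realType} (m j : nat) : (j <= m)%N ->
  \sum_(i < m.+1) (-1) ^+ (i - j) * ('C(m, i) * 'C(i, j))%:R = (j == m)%:R :> R.
Proof.
move=> hj.
rewrite -(big_mkord xpredT (fun i => (-1) ^+ (i - j) * ('C(m, i) * 'C(i, j))%:R : R)).
rewrite (big_cat_nat (n := j)) //=; last by lia.
rewrite big1_seq ?add0r; last first.
  move=> i; rewrite mem_index_iota => /andP[_ hi].
  by rewrite (bin_small hi) muln0 mulr0.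
rewrite -{1}(add0n j) big_addn.
under eq_bigr => i _ do rewrite addnK binA natrM mulrCA.
rewrite -mulr_sumr.
have -> : (m.+1 - j = (m - j).+1)%N by lia.
rewrite big_mkord alt_sum.
have [->|hne] := eqVneq j m; first by rewrite binn subnn eqxx mulr1.
have -> : (m - j == 0)%N = false by apply/negbTE; lia.
by rewrite mulr0.
Qed.

Lemma binv {R : realType} (r m : nat) :
  \sum_(i < m.+1) 'C(m, i)%:R * sfun r i = (m ^ r)%:R :> R.
Proof.
rewrite /sfun.
have step : forall i : 'I_m.+1,
  \sum_(j < i.+1) (-1) ^+ (i - j) * 'C(i, j)%:R * (j ^ r)%:R =
  \sum_(j < m.+1) (-1) ^+ (i - j) * 'C(i, j)%:R * (j ^ r)%:R :> R.
  move=> i; rewrite (big_ord_widen m.+1 (fun j => (-1) ^+ (i - j) * 'C(i, j)%:R * (j ^ r)%:R : R)) //.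
  rewrite [RHS](bigID (fun j : 'I_m.+1 => (j < i.+1)%N)) /= [X in _ = _ + X]big1 ?addr0 //.
  by move=> j; rewrite -leqNgt => hj; rewrite bin_small // mulr0 mul0r.
under eq_bigr => i _ do rewrite step mulr_sumr.
rewrite exchange_big /=.
rewrite (bigD1 ord_max) //= [X in _ + X]big1 ?addr0.
  transitivity ((m ^ r)%:R * (m == m)%:R : R); last by rewrite eqxx mulr1.
  rewrite -(@inner R m m) // mulr_sumr; apply: eq_bigr => i _.
  by rewrite natrM; ring.
move=> j hj.
have hjm : (j <= m)%N by rewrite -ltnS.
have : (j == m :> nat) = false by apply/negbTE; apply: contra hj => /eqP e; apply/eqP/val_inj.
move=> e.
transitivity ((j ^ r)%:R * (j == m :> nat)%:R : R); last by rewrite e mulr0.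
rewrite -(@inner R m j) // mulr_sumr; apply: eq_bigr => i _.
by rewrite natrM; ring.
Qed.

Definition im {n r : nat} (y : CCout n r) : {set 'I_n} := [set y i | i : 'I_r].

Lemma im_sub {n r : nat} (y : CCout n r) (B : {set 'I_n}) :
  (im y \subset B) = [forall i, y i \in B].
Proof.
apply/subsetP/forallP => [h i|h z /imsetP[i _ ->]]; last exact: h.
by apply: h; apply/imsetP; exists i.
Qed.

Lemma card_subB {n r : nat} (B : {set 'I_n}) :
  #|[set y : CCout n r | im y \subset B]| = (#|B| ^ r)%N.
Proof.
have -> : (#|B| ^ r = #|B| ^ #|'I_r|)%N by rewrite card_ord.
rewrite -card_ffun_on; apply: eq_card => y.
rewrite inE im_sub; apply/forallP/ffun_onP => h i; exact: h.
Qed.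

Lemma group_sizes {R : realType} {n : nat} (B : {set 'I_n}) (F : nat -> R) :
  \sum_(A : {set 'I_n} | A \subset B) F #|A| =
  \sum_(i < #|B|.+1) 'C(#|B|, i)%:R * F i.
Proof.
rewrite (partition_big (fun A : {set 'I_n} => inord #|A| : 'I_(#|B|.+1)) xpredT) //=.
apply: eq_bigr => i _.
rewrite (eq_bigl (fun A => A \in [set A : {set 'I_n} | A \subset B & #|A| == i])); last first.
  move=> A; rewrite inE; case hAB: (A \subset B) => //=.
  have hl : (#|A| < #|B|.+1)%N by rewrite ltnS subset_leq_card.
  apply/eqP/eqP => [<-|e]; first by rewrite inordK.
  by apply: val_inj; rewrite /= inordK.
rewrite (eq_bigr (fun _ => F i)); last by move=> A; rewrite inE => /andP[_ /eqP ->].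
by rewrite sumr_const cards_draws mulr_natl.
Qed.

Definition gcount {n : nat} (r : nat) (B : {set 'I_n}) := #|[set y : CCout n r | im y == B]|.

Lemma partition_im {R : realType} (n r : nat) (B : {set 'I_n}) (G : {set 'I_n} -> R) :
  \sum_(y : CCout n r | im y \subset B) G (im y) =
  \sum_(A : {set 'I_n} | A \subset B) (gcount r A)%:R * G A.
Proof.
rewrite (partition_big im (fun A => A \subset B)) //=.
apply: eq_bigr => A hA.
rewrite (eq_bigl (fun y => y \in [set y : CCout n r | im y == A])); last first.
  by move=> y; rewrite inE; case: (eqVneq (im y) A) => [->|]; rewrite ?hA ?andbF.
rewrite (eq_bigr (fun _ => G A)); last by move=> y; rewrite inE => /eqP ->.
by rewrite sumr_const mulr_natl.
Qed.

Lemma g_eq {R : realType} (n r : nat) (B : {set 'I_n}) :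
  (gcount r B)%:R = sfun r #|B| :> R.
Proof.
suff H : forall m (B : {set 'I_n}), #|B| = m -> (gcount r B)%:R = sfun r #|B| :> R by exact: H.
elim/ltn_ind => m IH {}B hB.
have e1 : ((#|B| ^ r)%:R : R) = \sum_(A : {set 'I_n} | A \subset B) (gcount r A)%:R.
  rewrite -(@card_subB n r) -sum1_card natr_sum.
  rewrite (eq_bigl (fun y => im y \subset B)); last by move=> y; rewrite inE.
  have := partition_im n r B (fun _ => 1 : R); rewrite /=.
  under eq_bigr do rewrite mulr1.
  by move=> <-.
have e2 : ((#|B| ^ r)%:R : R) = \sum_(A : {set 'I_n} | A \subset B) sfun r #|A|.
  by rewrite (group_sizes B (sfun r)) binv.
move: e2; rewrite e1 (bigD1 B) //= [X in _ = X](bigD1 B) //=.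
have hS : \sum_(A : {set 'I_n} | (A \subset B) && (A != B)) (gcount r A)%:R =
   \sum_(A : {set 'I_n} | (A \subset B) && (A != B)) sfun r #|A| :> R.
  apply: eq_bigr => A /andP[hAB hne]; apply: (IH #|A|) => //.
  rewrite -hB; apply: proper_card; by rewrite properEneq hne hAB.
by rewrite hS => /addIr.
Qed.

Lemma gcount0 (n r : nat) (A : {set 'I_n}) : (0 < r)%N ->
  ~~ (0 < #|A| <= r)%N -> gcount r A = 0%N.
Proof.
move=> hr hA; apply/eqP; rewrite cards_eq0; apply/eqP/setP => y; rewrite !inE.
apply/negbTE/eqP => e; move: hA; rewrite -e.
have h1 : (#|im y| <= r)%N by rewrite -{2}(card_ord r) leq_imset_card.
have h0 : (0 < #|im y|)%N.
  by apply/card_gt0P; exists (y (Ordinal hr)); apply/imsetP; exists (Ordinal hr).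
by rewrite h0 h1.
Qed.

Lemma main_sum {R : realType} (n k r : nat) (hr : (0 < r)%N) (X : {set 'I_n})
  (hX : #|X| = k) (F : nat -> R) :
  \sum_(y : CCout n r | im y \subset X) F #|im y| =
  \sum_(1 <= l < (minn k r).+1) 'C(k, l)%:R * sfun r l * F l.
Proof.
rewrite (partition_im n r X (fun A => F #|A|)).
pose G i := if (0 < i <= r)%N then sfun r i * F i else 0 : R.
transitivity (\sum_(A : {set 'I_n} | A \subset X) G #|A|).
  apply: eq_bigr => A _; rewrite /G; case: ifP => h; first by rewrite g_eq.
  by rewrite gcount0 ?h // mul0r.
rewrite group_sizes hX -(big_mkord xpredT (fun i => 'C(k, i)%:R * G i)).
rewrite (big_cat_nat (n := 1%N)) //= big_nat1.
rewrite /G /= mulr0 add0r (big_cat_nat (n := (minn k r).+1)) //=; last by rewrite ltnS geq_minl.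
rewrite [X in _ + X]big1_seq ?addr0; last first.
  move=> i; rewrite mem_index_iota => /andP[h1 h2].
  have -> : (0 < i <= r)%N = false by apply/negbTE; lia.
  by rewrite mulr0.
apply: eq_big_nat => i /andP[h1 h2].
have -> : (0 < i <= r)%N by apply/andP; split; lia.
by rewrite mulrA.
Qed.

Lemma card_cont (n k : nat) (A : {set 'I_n}) : (#|A| <= k)%N ->
  #|[set x : CCin n k | A \subset val x]| = 'C(n - #|A|, k - #|A|).
Proof.
move=> hA.
rewrite -(card_imset _ val_inj).
have -> : val @: [set x : CCin n k | A \subset val x] =
    [set X : {set 'I_n} | A \subset X & #|X| == k].
  apply/setP => X; rewrite inE; apply/imsetP/andP => [[x hx ->]|[h1 h2]].
    by rewrite inE in hx; split => //; exact: (valP x).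
  by exists (exist _ X h2) => //; rewrite inE.
have hinj : {in [set X : {set 'I_n} | A \subset X & #|X| == k] &, injective (fun X => X :\: A)}.
  move=> X1 X2; rewrite !inE => /andP[/subsetP h1 _] /andP[/subsetP h2 _] e.
  apply/setP => z; have := congr1 (fun S : {set 'I_n} => z \in S) e; rewrite /= !inE.
  by case hz: (z \in A) => //= _; rewrite h1 ?h2.
rewrite -(card_in_imset hinj).
have -> : (fun X => X :\: A) @: [set X : {set 'I_n} | A \subset X & #|X| == k] =
    [set D : {set 'I_n} | D \subset ~: A & #|D| == (k - #|A|)%N].
  apply/setP => D; rewrite inE; apply/imsetP/andP => [[X hX ->]|[h1 h2]].
    rewrite inE in hX; case/andP: hX => hAX /eqP hX; split.
      by apply/subsetP => z; rewrite !inE => /andP[].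
    by rewrite cardsDS // hX.
  exists (D :|: A).
    rewrite inE subsetUr /= cardsU.
    have -> : D :&: A = set0.
      apply/setP => z; rewrite !inE; apply/negbTE; apply/negP => /andP[hz hz'].
      by move/subsetP: h1 => /(_ z hz); rewrite inE hz'.
    by rewrite cards0 subn0 (eqP h2) subnK.
  apply/setP => z; rewrite !inE.
  case hz: (z \in A) => /=; last by rewrite orbF.
  by apply/negbTE; apply/negP => hzD; move/subsetP: h1 => /(_ z hzD); rewrite inE hz.
rewrite cards_draws.
have -> : #|~: A| = (n - #|A|)%N by have := cardsC A; rewrite card_ord; lia.
by [].
Qed.

Lemma sum_ind {R : realType} (T : finType) (P : pred T) :
  \sum_(t : T) ((P t)%:R : R) = #|P|%:R.
Proof.
rewrite (bigID P) /= [X in _ + X]big1 ?addr0 => [|t /negbTE ->//].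
rewrite (eq_bigr (fun _ => 1)) => [|t ->//].
by rewrite sumr_const.
Qed.

Lemma sum_const_cond {R : realType} (T : finType) (P : pred T) (c : R) :
  \sum_(t : T | P t) c = c * #|P|%:R.
Proof.
rewrite big_mkcond -sum_ind mulr_sumr; apply: eq_bigr => t _.
by case: (P t); rewrite ?mulr1 ?mulr0.
Qed.

Lemma cardIn (n k : nat) : #|{: CCin n k}| = 'C(n, k).
Proof.
rewrite card_sig; have := card_draws 'I_n k; rewrite card_ord => <-.
by apply: eq_card => X; rewrite !inE.
Qed.

Lemma W_supp {R : realType} (n k r : nat) (x : CCin n k) (y : CCout n r) :
  @CCchan R n k r x y = if im y \subset val x then k%:R ^- r else 0.
Proof. by rewrite /CCchan im_sub. Qed.

Lemma W_ge0 {R : realType} (n k r : nat) (x : CCin n k) (y : CCout n r) :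
  0 <= @CCchan R n k r x y.
Proof. by rewrite W_supp; case: ifP => // _; rewrite invr_ge0 exprn_ge0 // ler0n. Qed.

Lemma rowsum {R : realType} (n k r : nat) (hk : (0 < k)%N) (x : CCin n k) :
  \sum_y @CCchan R n k r x y = 1.
Proof.
under eq_bigr do rewrite W_supp.
rewrite -big_mkcond /= sum_const_cond.
have -> : #|[pred y : CCout n r | im y \subset val x]| = (#|val x| ^ r)%N.
  by rewrite -card_subB; apply: eq_card => y; rewrite !inE //.
rewrite (eqP (valP x)) natrX mulVf // expf_neq0 // pnatr_eq0 -lt0n //.
Qed.

Lemma colsum {R : realType} (n k r : nat) (y : CCout n r) :
  \sum_x @CCchan R n k r x y = k%:R ^- r * #|[set x : CCin n k | im y \subset val x]|%:R.
Proof.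
under eq_bigr do rewrite W_supp.
rewrite -big_mkcond /= sum_const_cond.
by congr (_ * _%:R); apply: eq_card => x; rewrite !inE.
Qed.

Definition Qof {R : realType} {n k r : nat} (P : CCin n k -> R) (y : CCout n r) : R :=
  \sum_x P x * @CCchan R n k r x y.

Lemma unifE {R : realType} (n k : nat) (x : CCin n k) :
  @unif R (CCin n k) x = ('C(n, k)%:R)^-1.
Proof. by rewrite /unif cardIn. Qed.

Lemma Q0_val {R : realType} (n k r : nat) (x : CCin n k) (y : CCout n r) :
  im y \subset val x ->
  Qof (@unif R (CCin n k)) y =
  ('C(n, k)%:R)^-1 * (k%:R ^- r * 'C(n - #|im y|, k - #|im y|)%:R).
Proof.
move=> h.
rewrite /Qof (eq_bigr (fun x => ('C(n, k)%:R)^-1 * @CCchan R n k r x y)); last first.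
  by move=> x' _; rewrite unifE.
rewrite -mulr_sumr colsum card_cont //.
by rewrite -(eqP (valP x)) subset_leq_card.
Qed.

Lemma Q0_pos {R : realType} (n k r : nat) (hkn : (k <= n)%N) (x : CCin n k) (y : CCout n r) :
  0 < @CCchan R n k r x y -> 0 < Qof (@unif R (CCin n k)) y.
Proof.
rewrite W_supp; case: ifP => h; last by rewrite ltxx.
move=> hk; rewrite (Q0_val _ _ _ x y h).
have hl : (#|im y| <= k)%N by rewrite -(eqP (valP x)) subset_leq_card.
rewrite mulr_gt0 // ?invr_gt0 ?ltr0n ?bin_gt0 // mulr_gt0 // ltr0n bin_gt0; lia.
Qed.

Definition cval {R : realType} (n k r : nat) : R :=
  log2 ('C(n, k)%:R) - k%:R ^- r * \sum_(1 <= l < (minn k r).+1)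
     'C(k, l)%:R * sfun r l * log2 ('C(n - l, k - l)%:R).

Lemma log2_div {R : realType} (a b : R) : 0 < a -> 0 < b ->
  log2 (a / b) = log2 a - log2 b.
Proof. by move=> ha hb; rewrite /log2 ln_div ?posrE // mulrBl. Qed.

Lemma rowval {R : realType} (n k r : nat) (hk : (0 < k)%N) (hkn : (k <= n)%N)
  (hr : (0 < r)%N) (x : CCin n k) :
  \sum_y @CCchan R n k r x y * log2 (@CCchan R n k r x y / Qof (@unif R (CCin n k)) y)
  = cval n k r.
Proof.
have hkr : (k%:R ^+ r : R) != 0 by rewrite expf_neq0 // pnatr_eq0 -lt0n.
have hN : ('C(n, k)%:R : R) != 0 by rewrite pnatr_eq0 -lt0n bin_gt0.
transitivity (\sum_(y : CCout n r | im y \subset val x)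
   k%:R ^- r * (log2 ('C(n, k)%:R) - log2 ('C(n - #|im y|, k - #|im y|)%:R) : R)).
  rewrite [RHS]big_mkcond; apply: eq_bigr => y _; rewrite W_supp; case: ifP => h; last by rewrite mul0r.
  rewrite (Q0_val _ _ _ x y h).
  have hl : (#|im y| <= k)%N by rewrite -(eqP (valP x)) subset_leq_card.
  have hC : ('C(n - #|im y|, k - #|im y|)%:R : R) != 0 by rewrite pnatr_eq0 -lt0n bin_gt0; lia.
  congr (_ * _); rewrite -log2_div; last 2 first.
  - by rewrite ltr0n bin_gt0.
  - by rewrite ltr0n bin_gt0; lia.
  congr log2; field.
  by rewrite hN hC hkr.
rewrite -mulr_sumr sumrB sum_const_cond.
rewrite (main_sum _ _ _ hr _ (eqP (valP x)) (fun l => log2 ('C(n - l, k - l)%:R : R))).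
have -> : #|[pred y : CCout n r | im y \subset val x]| = (k ^ r)%N.
  have e := eqP (valP x); rewrite -[in RHS]e -card_subB; apply: eq_card => y; rewrite !inE //.
by rewrite /cval mulrBr natrX mulrCA mulVf // mulr1.
Qed.

Lemma Q_ge {R : realType} (n k r : nat) (P : CCin n k -> R) (hP : is_dist P)
  (x : CCin n k) (y : CCout n r) : P x * @CCchan R n k r x y <= Qof P y.
Proof.
rewrite /Qof (bigD1 x) //= lerDl; apply: sumr_ge0 => x' _.
by rewrite mulr_ge0 ?W_ge0 //; case: hP.
Qed.

Lemma term_dec {R : realType} (n k r : nat) (hkn : (k <= n)%N) (P : CCin n k -> R)
  (hP : is_dist P) (x : CCin n k) (y : CCout n r) :
  (if P x * @CCchan R n k r x y == 0 then 0
   else P x * @CCchan R n k r x y * log2 (@CCchan R n k r x y / Qof P y)) =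
  P x * (@CCchan R n k r x y * log2 (@CCchan R n k r x y / Qof (@unif R (CCin n k)) y))
  + P x * @CCchan R n k r x y * log2 (Qof (@unif R (CCin n k)) y / Qof P y).
Proof.
set W := @CCchan R n k r x y; set Q := Qof P y; set Q0 := Qof _ y.
have [h|h] := eqVneq (P x * W) 0; first by rewrite mulrA h !mul0r addr0.
have /andP[hPx hW] : (P x != 0) && (W != 0) by move: h; rewrite mulf_eq0 negb_or.
have hPx' : 0 < P x by rewrite lt0r hPx /=; case: hP => ->.
have hW' : 0 < W by rewrite lt0r hW W_ge0.
have hQ : 0 < Q by apply: lt_le_trans (Q_ge _ _ _ _ hP x y); rewrite mulr_gt0.
have hQ0 : 0 < Q0 by apply: (Q0_pos _ _ _ hkn x y hW').
have -> : W / Q = (W / Q0) * (Q0 / Q).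
  by field; rewrite ?gt_eqF.
rewrite /log2 lnM ?posrE ?divr_gt0 //.
ring.
Qed.

Lemma sumQ {R : realType} (n k r : nat) (hk : (0 < k)%N) (P : CCin n k -> R)
  (hP : is_dist P) : \sum_(y : CCout n r) Qof P y = 1.
Proof.
rewrite /Qof exchange_big /=.
under eq_bigr do rewrite -mulr_sumr rowsum // mulr1.
by case: hP.
Qed.

Lemma unif_dist {R : realType} (n k : nat) (hkn : (k <= n)%N) :
  is_dist (@unif R (CCin n k)).
Proof.
split=> [x|]; rewrite /unif ?invr_ge0 ?ler0n //.
rewrite sumr_const. change ((#|{: CCin n k}|%:R : R)^-1 *+ #|{: CCin n k}| = 1). rewrite cardIn -(mulr_natr ('C(n, k)%:R)^-1 'C(n, k)) mulVf //.
by rewrite pnatr_eq0 -lt0n bin_gt0.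
Qed.

Lemma mutinf_dec {R : realType} (n k r : nat) (hk : (0 < k)%N) (hkn : (k <= n)%N)
  (hr : (0 < r)%N) (P : CCin n k -> R) (hP : is_dist P) :
  mutinf P (@CCchan R n k r) =
  cval n k r + \sum_(y : CCout n r) Qof P y * log2 (Qof (@unif R (CCin n k)) y / Qof P y).
Proof.
rewrite /mutinf /=.
under eq_bigr do under eq_bigr do rewrite (term_dec _ _ _ hkn _ hP).
under eq_bigr do rewrite big_split /= -mulr_sumr rowval //.
rewrite big_split /= -mulr_suml.
have -> : \sum_i P i = 1 by case: hP.
rewrite mul1r exchange_big /=; congr (_ + _); apply: eq_bigr => y _.
by rewrite /Qof [RHS]mulr_suml.
Qed.

Lemma ln2_gt0 {R : realType} : 0 < ln (2 : R).
Proof. by apply: ln_gt0; rewrite ltr1n. Qed.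

Lemma gibbs {R : realType} (n k r : nat) (hk : (0 < k)%N) (hkn : (k <= n)%N)
  (P : CCin n k -> R) (hP : is_dist P) :
  \sum_(y : CCout n r) Qof P y * log2 (Qof (@unif R (CCin n k)) y / Qof P y) <= 0.
Proof.
have hU := @unif_dist R n k hkn.
have hl2 := @ln2_gt0 R.
apply: (@le_trans _ _ (\sum_(y : CCout n r) (Qof (@unif R (CCin n k)) y - Qof P y) / ln 2)).
  apply: ler_sum => y _.
  set Q := Qof P y; set Q0 := Qof _ y.
  have hQ : 0 <= Q by apply: sumr_ge0 => x _; rewrite mulr_ge0 ?W_ge0 //; case: hP.
  have hQ0 : 0 <= Q0 by apply: sumr_ge0 => x _; rewrite mulr_ge0 ?W_ge0 //; case: hU.
  have [e|ne] := eqVneq Q 0.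
    by rewrite e mul0r subr0 divr_ge0 // ltW.
  have hQp : 0 < Q by rewrite lt0r ne hQ.
  have hQ0p : 0 < Q0.
    rewrite lt0r hQ0 andbT; apply/eqP => e0; move/eqP: ne; apply.
    have H : forall x, @unif R (CCin n k) x * @CCchan R n k r x y = 0.
      move=> x; apply: (psumr_eq0P _ e0) => // x' _.
      by rewrite mulr_ge0 ?W_ge0 //; case: hU.
    rewrite /Q /Qof big1 // => x _.
    have hu : @unif R (CCin n k) x != 0 by rewrite unifE invr_eq0 pnatr_eq0 -lt0n bin_gt0.
    by have /eqP := H x; rewrite mulf_eq0 (negbTE hu) /= => /eqP ->; rewrite mulr0.
  have hq : 0 < Q0 / Q by rewrite divr_gt0.
  have h := @le_ln1Dx R (Q0 / Q - 1) ltac:(lra).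
  rewrite addrCA subrr addr0 in h.
  rewrite /log2 mulrA ler_pM2r ?invr_gt0 //.
  have -> : Q0 - Q = Q * (Q0 / Q - 1) by field; rewrite gt_eqF.
  by rewrite ler_wpM2l.
by rewrite -mulr_suml sumrB !sumQ // subrr mul0r.
Qed.

Lemma stirl {R : realType} (r l : nat) : @stirling2 R r l * (l`!)%:R = sfun r l.
Proof. by rewrite /stirling2 mulrC mulrA mulfV ?mul1r // pnatr_eq0 -lt0n fact_gt0. Qed.

Theorem theorem1 (R : realType) (n k r : nat)
  (hk : (0 < k)%N) (hkn : (k < n)%N) (hr : (0 < r)%N) :
  let L := minn k r in
  let C : R := log2 ('C(n, k)%:R) -
      (k%:R ^- r) * \sum_(1 <= l < L.+1)
         'C(k, l)%:R * stirling2 r l * (l`!)%:R * log2 ('C(n - l, k - l)%:R) in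
  is_capacity (@CCchan R n k r) C /\
  mutinf (@unif R (CCin n k)) (@CCchan R n k r) = C.
Proof.
move=> L C.
have hkn' : (k <= n)%N := ltnW hkn.
have eC : C = cval n k r.
  rewrite /C /cval /L; congr (_ - _ * _); apply: eq_big_nat => l _.
  by rewrite -(mulrA _ (stirling2 r l)) stirl.
have hu : mutinf (@unif R (CCin n k)) (@CCchan R n k r) = C.
  rewrite (mutinf_dec _ _ _ hk hkn' hr _ (@unif_dist R _ _ hkn')) eC big1 ?addr0 // => y _.
  have [->|ne] := eqVneq (Qof (@unif R (CCin n k)) y) 0; first by rewrite mul0r.
  by rewrite divff // /log2 ln1 mul0r mulr0.
split=> //; split; first by exists (@unif R (CCin n k)); split=> //; exact: unif_dist.
move=> P hP; rewrite (mutinf_dec _ _ _ hk hkn' hr _ hP) eC.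
have := @gibbs R _ _ r hk hkn' _ hP; lra.
Qed.
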